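(* Let $\lambda<\mathfrak{t}$ be an infinite cardinal, let $A\subseteq\omega$ be infinite, and let $(f_\alpha:\alpha<\lambda)$ be a sequence of functions $f_\alpha:\omega\to[\omega]^{<\aleph_0}$ such that $f_\beta\le_A f_\alpha$ for all $\alpha<\beta<\lambda$, and such that for each $\alpha<\lambda$ the set $\{m\in A: f_\alpha(m)=\emptyset\}$ is finite. Then there exist an infinite $B\subseteq A$ and a function $f:\omega\to[\omega]^{<\aleph_0}$ such that $f\le_B f_\alpha$ for every $\alpha<\lambda$ and $f(m)\neq\emptyset$ for every $m\in B$.
   Context: $[\omega]^{<\aleph_0}$ is the set of finite subsets of $\omega$. For $X,Y\subseteq\omega$ (or of $\omega\times\omega$), $X\subseteq_* Y$ means $X\setminus Y$ is finite. A tower is a sequence $(X_\alpha:\alpha<\kappa)$ of infinite subsets of $\omega$ with $X_\beta\subseteq_* X_\alpha$ whenever $\alpha<\beta<\kappa$; a pseudo-intersection of a family of sets is an infinite $X$ with $X\subseteq_* B$ for every member $B$ of the family. $\mathfrak{t}$ is the least cardinality of a tower with no pseudo-intersection. For $f,g:\omega\to[\omega]^{<\aleph_0}$ and infinite $A\subseteq\omega$, $f\le_A g$ means that $\{n\in A: f(n)\not\subseteq g(n)\}$ is finite. *)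

(* Defs.v *)
(* plain Prop-valued sets of naturals; finite subsets of omega
   are represented as lists of naturals (read as the set of their elements). *)
From Stdlib Require Import List Arith.
Import ListNotations.

Definition finite_set (X : nat -> Prop) : Prop := exists N, forall n, X n -> n < N.
Definition infinite_set (X : nat -> Prop) : Prop := forall N, exists n, N <= n /\ X n.

Definition subset_star (X Y : nat -> Prop) : Prop :=
  finite_set (fun n => X n /\ ~ Y n).

Definition fin_subset (s t : list nat) : Prop := forall x, In x s -> In x t.

Definition le_on (A : nat -> Prop) (f g : nat -> list nat) : Prop :=
  finite_set (fun n => A n /\ ~ fin_subset (f n) (g n)).

Definition strict_well_order {I : Type} (lt : I -> I -> Prop) : Prop :=
  well_founded lt /\
  (forall a b c, lt a b -> lt b c -> lt a c) /\
  (forall a b, lt a b \/ a = b \/ lt b a).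

Definition card_le (I J : Type) : Prop := exists g : I -> J, forall x y, g x = g y -> x = y.

(* a well-order (I, lt) is (isomorphic to) a cardinal, i.e. an initial ordinal:
   every proper initial segment has strictly smaller cardinality *)
Definition initial_ordinal {I : Type} (lt : I -> I -> Prop) : Prop :=
  strict_well_order lt /\ forall a : I, ~ card_le I {b : I | lt b a}.

Definition is_tower {I : Type} (lt : I -> I -> Prop) (X : I -> nat -> Prop) : Prop :=
  (forall i, infinite_set (X i)) /\ (forall i j, lt i j -> subset_star (X j) (X i)).

Definition has_pseudo_intersection {I : Type} (X : I -> nat -> Prop) : Prop :=
  exists Y, infinite_set Y /\ forall i, subset_star Y (X i).

(* |L| < t : every tower whose length is a cardinal kappa <= |L|
   has a pseudo-intersection *)
Definition card_lt_t (L : Type) : Prop :=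
  forall (I : Type) (ltI : I -> I -> Prop), initial_ordinal ltI -> card_le I L ->
  forall X : I -> nat -> Prop, is_tower ltI X -> has_pseudo_intersection X.

(* Main.v *)
Require Import Defs.
From Stdlib Require Import List Arith.
Import ListNotations.
From Stdlib Require Import Cantor ClassicalEpsilon Lia.

Fixpoint colsum (g : nat -> list nat) (N : nat) : nat :=
  match N with 0 => 0 | S N' => colsum g N' + list_sum (g N') end.

Lemma in_le_sum k l : In k l -> k <= list_sum l.
Proof. induction l; simpl; intros H; [tauto|]. destruct H; subst; [lia|]. specialize (IHl H); lia. Qed.

Lemma bnd_col g N m k : m < N -> In k (g m) -> k <= colsum g N.
Proof.
  induction N; intros Hm Hk; [lia|]. simpl.
  destruct (Nat.eq_dec m N) as [->|].
  - pose proof (in_le_sum _ _ Hk); lia.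
  - assert (m < N) by lia. specialize (IHN H Hk); lia.
Qed.

Lemma pair_bound n M : fst (of_nat n) <= M -> snd (of_nat n) <= M ->
  n * 2 <= M * 2 + (M + M) * S (M + M).
Proof.
  rewrite <- (cancel_to_of n). destruct (of_nat n) as [m k]. rewrite cancel_of_to. simpl.
  intros H1 H2. pose proof (to_nat_spec m k) as Hs. change (to_nat (m,k) * 2 <= M * 2 + (M + M) * S (M + M)). rewrite Hs.
  assert (k + m <= M + M) by lia.
  pose proof (Nat.mul_le_mono _ _ _ _ H (le_n_S _ _ H)). lia.
Qed.

Theorem mainTheorem9
  (L : Type) (ltL : L -> L -> Prop)
  (HL : initial_ordinal ltL)
  (Hinf : card_le nat L)
  (Ht : card_lt_t L)
  (A : nat -> Prop) (HA : infinite_set A)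
  (F : L -> nat -> list nat)
  (Hmono : forall a b, ltL a b -> le_on A (F b) (F a))
  (Hne : forall a, finite_set (fun m => A m /\ F a m = [])) :
  exists B : nat -> Prop,
    (forall n, B n -> A n) /\ infinite_set B /\
    exists f : nat -> list nat,
      (forall a, le_on B f (F a)) /\ (forall m, B m -> f m <> []).
Proof.
  set (X := fun a n => A (fst (of_nat n)) /\ In (snd (of_nat n)) (F a (fst (of_nat n)))).
  assert (Htow : is_tower ltL X).
  { split.
    - intros a N. destruct (Hne a) as [N1 HN1].
      destruct (HA (N + N1)) as [m [Hm HAm]].
      destruct (F a m) as [|k l] eqn:E.
      + specialize (HN1 m (conj HAm E)); lia.
      + exists (to_nat (m, k)). pose proof (to_nat_non_decreasing m k).
        split; [lia|]. unfold X. rewrite cancel_of_to. simpl. rewrite E. simpl. auto.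
    - intros a b Hab. destruct (Hmono a b Hab) as [N0 HN0].
      set (K := colsum (F b) N0). set (M := N0 + K).
      exists (S (M * 2 + (M + M) * S (M + M))).
      intros n [[HAm Hk] Hn].
      assert (Hm : fst (of_nat n) < N0).
      { apply HN0. split; auto. intro Hs. apply Hn. split; auto. }
      pose proof (bnd_col _ _ _ _ Hm Hk).
      pose proof (pair_bound n M ltac:(unfold M; lia) ltac:(unfold M,K in *; lia)). lia. }
  assert (HLL : card_le L L) by (exists (fun x => x); auto).
  destruct (Ht L ltL HL HLL X Htow) as [Y [HYi HYs]].
  destruct Hinf as [g _]. set (a0 := g 0).
  set (Y' := fun n => Y n /\ X a0 n).
  set (B := fun m => exists k, Y' (to_nat (m, k))).
  set (e := fun m => epsilon (inhabits 0) (fun k => Y' (to_nat (m, k)))).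
  exists B. split; [|split].
  - intros m [k [_ [H _]]]. rewrite cancel_of_to in H. exact H.
  - intros N. destruct (HYs a0) as [N2 HN2].
    set (K := colsum (F a0) N). set (M := N + K).
    destruct (HYi (N2 + S (M * 2 + (M + M) * S (M + M)))) as [n [Hn HYn]].
    assert (HXn : X a0 n).
    { destruct (Classical_Prop.classic (X a0 n)) as [h|h]; auto.
      specialize (HN2 n (conj HYn h)). lia. }
    destruct (le_lt_dec N (fst (of_nat n))) as [Hle|Hlt].
    + exists (fst (of_nat n)). split; auto. exists (snd (of_nat n)).
      rewrite <- surjective_pairing, cancel_to_of. split; auto.
    + exfalso. destruct HXn as [_ Hk].
      pose proof (bnd_col _ _ _ _ Hlt Hk).
      pose proof (pair_bound n M ltac:(unfold M; lia) ltac:(unfold M,K in *; lia)). lia.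
  - exists (fun m => [e m]). split.
    + intros a. destruct (HYs a) as [N3 HN3]. exists N3.
      intros m [HB Hs].
      pose proof (epsilon_spec (inhabits 0) (fun k => Y' (to_nat (m, k))) HB) as He.
      fold (e m) in He. destruct He as [HY _].
      assert (Hx : ~ X a (to_nat (m, e m))).
      { intros [_ Hin]. rewrite cancel_of_to in Hin. simpl in Hin. apply Hs.
        intros x [<-|[]]. exact Hin. }
      specialize (HN3 _ (conj HY Hx)). pose proof (to_nat_non_decreasing m (e m)). lia.
    + intros m _. discriminate.
Qed.
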